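(* Let $C\subseteq\mathbb R$ be a compact interval and $g_1,\dots,g_N:C\to\mathbb R$ continuous functions. Suppose there exist $o_i^*\in\operatorname*{argmax}_{o\in C}g_i(o)$, $i=1,\dots,N$, with $o_1^*\ge o_2^*\ge\cdots\ge o_N^*$, such that each $g_i$ is non-decreasing on $C\cap(-\infty,o_i^*]$ and non-increasing on $C\cap[o_i^*,\infty)$. Then $$\sup_{\substack{\bm v\in C^N\\ v_1\le\cdots\le v_N}}\ \sum_{i=1}^N g_i(v_i)=\sup_{v\in C}\ \sum_{i=1}^N g_i(v).$$ *)

(* Defs.v *)
From Stdlib Require Import Reals Lra.
Open Scope R_scope.

Definition cont_on_interval (a b : R) (f : R -> R) : Prop :=
  forall x, a <= x <= b ->
    forall eps, 0 < eps -> exists delta, 0 < delta /\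
      forall y, a <= y <= b -> Rabs (y - x) < delta -> Rabs (f y - f x) < eps.

Fixpoint sumN (N : nat) (h : nat -> R) : R :=
  match N with
  | O => 0
  | S n => sumN n h + h n
  end.

Definition ordered_values (a b : R) (N : nat) (g : nat -> R -> R) (y : R) : Prop :=
  exists v : nat -> R,
    (forall i, (i < N)%nat -> a <= v i <= b) /\
    (forall i, (S i < N)%nat -> v i <= v (S i)) /\
    y = sumN N (fun i => g i (v i)).

Definition diagonal_values (a b : R) (N : nat) (g : nat -> R -> R) (y : R) : Prop :=
  exists v, a <= v <= b /\ y = sumN N (fun i => g i v).

(* Main.v *)
Require Import Defs.
From Stdlib Require Import Reals Lra Lia.
Open Scope R_scope.

Lemma sumN_le (N : nat) (f h : nat -> R) :
  (forall i, (i < N)%nat -> f i <= h i) -> sumN N f <= sumN N h.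
Proof.
  induction N as [|n IH]; intros H; simpl. lra.
  assert (H1 := IH (fun i Hi => H i ltac:(lia))). assert (H2 := H n ltac:(lia)). lra.
Qed.

Lemma chain_up (N : nat) (v : nat -> R) :
  (forall i, (S i < N)%nat -> v i <= v (S i)) ->
  forall k i, (i + k < N)%nat -> v i <= v (i + k)%nat.
Proof.
  intros H k; induction k as [|k IH]; intros i Hi.
  - rewrite Nat.add_0_r; lra.
  - replace (i + S k)%nat with (S (i + k)) by lia.
    assert (A := IH i ltac:(lia)). assert (B := H (i + k)%nat ltac:(lia)). lra.
Qed.

Lemma chain_down (N : nat) (v : nat -> R) :
  (forall i, (S i < N)%nat -> v (S i) <= v i) ->
  forall k i, (i + k < N)%nat -> v (i + k)%nat <= v i.
Proof.
  intros H k; induction k as [|k IH]; intros i Hi.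
  - rewrite Nat.add_0_r; lra.
  - replace (i + S k)%nat with (S (i + k)) by lia.
    assert (A := IH i ltac:(lia)). assert (B := H (i + k)%nat ltac:(lia)). lra.
Qed.

Lemma pick_w (a b : R) (m M : nat -> R) (N : nat) :
  a <= b ->
  (forall i, (i < N)%nat -> a <= m i <= b /\ a <= M i) ->
  (forall i j, (i < N)%nat -> (j < N)%nat -> m i <= M j) ->
  exists w, a <= w <= b /\ (forall i, (i < N)%nat -> m i <= w <= M i).
Proof.
  intros hab Hm HP.
  assert (G : forall n, (n <= N)%nat -> exists w, a <= w <= b /\
     (forall i, (i < n)%nat -> m i <= w) /\ (forall j, (j < N)%nat -> w <= M j)).
  { induction n as [|n IH]; intros Hn.
    - exists a; split; [lra|split]; [intros; lia|]. intros j Hj; apply (Hm j Hj).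
    - destruct (IH ltac:(lia)) as [w [Hw [H1 H2]]].
      exists (Rmax w (m n)). destruct (Hm n ltac:(lia)) as [[Hm1 Hm2] _].
      split; [unfold Rmax; destruct (Rle_dec w (m n)); lra|split].
      + intros i Hi. destruct (Nat.eq_dec i n) as [->|Hne].
        * apply Rmax_r.
        * eapply Rle_trans; [apply H1; lia|apply Rmax_l].
      + intros j Hj. apply Rmax_lub; [apply H2; auto|apply HP; lia]. }
  destruct (G N (le_n N)) as [w [Hw [H1 H2]]].
  exists w; split; auto.
Qed.

Theorem lemma5 (a b : R) (N : nat) (g : nat -> R -> R) (o : nat -> R) :
  a <= b ->
  (forall i, (i < N)%nat -> cont_on_interval a b (g i)) ->
  (forall i, (i < N)%nat -> a <= o i <= b /\
      (forall x, a <= x <= b -> g i x <= g i (o i))) ->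
  (forall i, (S i < N)%nat -> o (S i) <= o i) ->
  (forall i, (i < N)%nat ->
      forall x y, a <= x -> x <= y -> y <= o i -> g i x <= g i y) ->
  (forall i, (i < N)%nat ->
      forall x y, o i <= x -> x <= y -> y <= b -> g i y <= g i x) ->
  exists s, is_lub (ordered_values a b N g) s /\ is_lub (diagonal_values a b N g) s.
Proof.
  intros hab _ Hmax Ho Hinc Hdec.
  assert (Dom : forall y, ordered_values a b N g y ->
            exists z, diagonal_values a b N g z /\ y <= z).
  { intros y [v [Hv [Hmon ->]]].
    destruct (pick_w a b (fun i => Rmin (v i) (o i)) (fun i => Rmax (v i) (o i)) N hab)
      as [w [Hw Hwi]].
    - intros i Hi. destruct (Hv i Hi). destruct (Hmax i Hi) as [[] _].
      unfold Rmin, Rmax; destruct (Rle_dec (v i) (o i)); lra.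
    - intros i j Hi Hj. destruct (Nat.le_gt_cases i j).
      + assert (A := chain_up N v Hmon (j - i) i ltac:(lia)).
        replace (i + (j - i))%nat with j in A by lia.
        unfold Rmin, Rmax; destruct (Rle_dec (v i) (o i)); destruct (Rle_dec (v j) (o j)); lra.
      + assert (A := chain_down N o Ho (i - j) j ltac:(lia)).
        replace (j + (i - j))%nat with i in A by lia.
        unfold Rmin, Rmax; destruct (Rle_dec (v i) (o i)); destruct (Rle_dec (v j) (o j)); lra.
    - exists (sumN N (fun i => g i w)). split.
      + exists w; split; auto.
      + apply sumN_le. intros i Hi. destruct (Hwi i Hi) as [W1 W2]. destruct (Hv i Hi).
        revert W1 W2. unfold Rmin, Rmax; destruct (Rle_dec (v i) (o i)); intros W1 W2.
        * apply (Hinc i Hi); lra.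
        * apply (Hdec i Hi); lra. }
  assert (Hb : bound (diagonal_values a b N g)).
  { exists (sumN N (fun i => g i (o i))). intros y [v [Hv ->]].
    apply sumN_le. intros i Hi. apply (proj2 (Hmax i Hi)); auto. }
  assert (Hne : exists x, diagonal_values a b N g x).
  { exists (sumN N (fun i => g i a)). exists a; split; auto; lra. }
  destruct (completeness _ Hb Hne) as [s [Hs1 Hs2]].
  exists s; split; [split|split; auto].
  - intros y Hy. destruct (Dom y Hy) as [z [Hz Hyz]]. eapply Rle_trans; [exact Hyz|]. apply Hs1; auto.
  - intros c Hc. apply Hs2. intros y [v [Hv ->]]. apply Hc.
    exists (fun _ => v). split; [auto|split; [intros; lra|reflexivity]].
Qed.
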